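(* For every $n\ge1$, ${\rm gp}_{\rm t}(S_3^n)={\rm gp}_{\rm d}(S_3^n)=3$, and $\#{\rm gp}_{\rm t}(S_3^n)=\#{\rm gp}_{\rm d}(S_3^n)=1$.
   Context: For $p\ge3$, $n\ge1$, the Sierpiński graph $S_p^n$ has vertex set $\{0,1,\dots,p-1\}^n$, a vertex written $i_1\cdots i_n$; vertices $i_1\cdots i_n$ and $j_1\cdots j_n$ are adjacent iff there is $h$ with $i_t=j_t$ for $t<h$, $i_h\ne j_h$, and $i_t=j_h$, $j_t=i_h$ for $t>h$. For $X\subseteq V(G)$, $u,v$ are $X$-positionable if every shortest $u,v$-path $P$ has $V(P)\cap X\subseteq\{u,v\}$. $X$ is a dual general position set if every two vertices of $X$ are $X$-positionable and every two vertices of $V(G)\setminus X$ are $X$-positionable; a total general position set if every two vertices of $G$ are $X$-positionable. ${\rm gp}_{\rm d},{\rm gp}_{\rm t}$ are the maximum sizes and $\#{\rm gp}_{\rm d},\#{\rm gp}_{\rm t}$ the numbers of sets attaining them. *)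

(* Defs.v *)
From mathcomp Require Import all_boot.
From mathcomp Require Import boolp.
Set Implicit Arguments. Unset Strict Implicit. Unset Printing Implicit Defensive.

(* Sierpinski graph S_p^n : vertices are words i_1 ... i_n over {0,...,p-1},
   represented as finite functions 'I_n -> 'I_p (index t : 'I_n is position t+1). *)
Definition sierp_vertex (p n : nat) := {ffun 'I_n -> 'I_p}.

Definition sierp_adj (p n : nat) : rel (sierp_vertex p n) :=
  fun u v =>
    [exists h : 'I_n,
      (u h != v h) &&
      [forall t : 'I_n,
         ((t < h)%N ==> (u t == v t)) &&
         ((h < t)%N ==> ((u t == v h) && (v t == u h)))]].

Section GP.
Variables (T : finType) (e : rel T).

(* x :: s is a u,v-walk; a shortest u,v-path is a u,v-walk of minimum length
   (any minimum-length walk is a path). *)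
Definition is_walk (u v : T) (s : seq T) : Prop := path e u s /\ last u s = v.

Definition shortest_path (u v : T) (s : seq T) : Prop :=
  is_walk u v s /\ forall s', is_walk u v s' -> (size s <= size s')%N.

Definition positionable (X : {set T}) (u v : T) : Prop :=
  forall s, shortest_path u v s ->
    forall w, w \in u :: s -> w \in X -> w = u \/ w = v.

Definition dual_gp_set (X : {set T}) : Prop :=
  (forall u v, u \in X -> v \in X -> u != v -> positionable X u v) /\
  (forall u v, u \notin X -> v \notin X -> u != v -> positionable X u v).

Definition total_gp_set (X : {set T}) : Prop :=
  forall u v, u != v -> positionable X u v.

Definition gp_d : nat := \max_(X : {set T} | `[< dual_gp_set X >]) #|X|.
Definition gp_t : nat := \max_(X : {set T} | `[< total_gp_set X >]) #|X|.

Definition num_gp_d : nat :=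
  #|[set X : {set T} | `[< dual_gp_set X >] && (#|X| == gp_d)]|.
Definition num_gp_t : nat :=
  #|[set X : {set T} | `[< total_gp_set X >] && (#|X| == gp_t)]|.
End GP.

(* Main.v *)
Require Import Defs.
From mathcomp Require Import all_boot.
From mathcomp Require Import boolp.
From mathcomp Require Import zify.
Set Implicit Arguments. Unset Strict Implicit. Unset Printing Implicit Defensive.

Lemma adj_intro n (u v : sierp_vertex 3 n) (h : 'I_n) :
  u h != v h -> (forall t : 'I_n, (t < h)%N -> u t = v t) ->
  (forall t : 'I_n, (h < t)%N -> u t = v h /\ v t = u h) -> sierp_adj u v.
Proof.
move=> Hh Hlt Hgt; apply/existsP; exists h; rewrite Hh /=.
apply/forallP => t; apply/andP; split; apply/implyP => Ht.
  by rewrite Hlt.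
by have [-> ->] := Hgt t Ht; rewrite !eqxx.
Qed.

Lemma adj_elim n (u v : sierp_vertex 3 n) : sierp_adj u v ->
  exists h : 'I_n, [/\ u h != v h, (forall t : 'I_n, (t < h)%N -> u t = v t) &
  (forall t : 'I_n, (h < t)%N -> u t = v h /\ v t = u h)].
Proof.
case/existsP => h /andP [Hh /forallP Hf]; exists h; split => // t Ht;
  have /andP [H1 H2] := Hf t.
  by apply/eqP; exact: (implyP H1).
by have /andP [/eqP -> /eqP ->] := implyP H2 Ht.
Qed.

Lemma adj_sym n (u v : sierp_vertex 3 n) : sierp_adj u v -> sierp_adj v u.
Proof.
case/adj_elim => h [H1 H2 H3]; apply: (adj_intro (h:=h)).
- by rewrite eq_sym.
- by move=> t /H2 ->.
- by move=> t /H3 [-> ->].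
Qed.

Lemma adj_irr n (u : sierp_vertex 3 n) : ~~ sierp_adj u u.
Proof. by apply/negP; case/adj_elim => h [/eqP]. Qed.

Lemma adj_first n (u v : sierp_vertex 3 n) (h : 'I_n) : sierp_adj u v ->
  (forall t : 'I_n, (t < h)%N -> u t = v t) -> u h != v h ->
  forall t : 'I_n, (h < t)%N -> u t = v h /\ v t = u h.
Proof.
case/adj_elim => h' [H1 H2 H3] Hlt Hh.
have -> : h = h'.
  apply/val_inj/eqP; rewrite eqn_leq; apply/andP; split; rewrite leqNgt; apply/negP => Hc.
  - by move: H1; rewrite Hlt ?eqxx.
  - by move: Hh; rewrite H2 ?eqxx.
done.
Qed.

Lemma same_class_pos (T : finType) (e : rel T) (X : {set T}) u v :
  dual_gp_set e X -> (u \in X) = (v \in X) -> u != v -> positionable e X u v.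
Proof.
case=> H1 H2 E Huv; case Hu: (u \in X).
  by apply: H1 => //; rewrite -E.
by apply: H2; rewrite ?Hu // -E Hu.
Qed.

Lemma twopath (T : finType) (e : rel T) (X : {set T}) x p q :
  (forall a b, e a b -> e b a) -> (forall a, ~~ e a a) ->
  dual_gp_set e X -> x \in X -> e x p -> e x q -> p != q -> ~~ e p q ->
  (p \in X) != (q \in X).
Proof.
move=> Hs Hi HX Hx Hp Hq Hpq Hnpq; apply/negP => /eqP E.
have Hpos := same_class_pos HX E Hpq.
have Hsh : shortest_path e p q [:: x; q].
  split; first by split => //=; rewrite Hs // Hq.
  move=> s' [Hw Hl]; case: s' Hw Hl => [|z [|w s']] //= Hw Hl.
  - by move: Hpq; rewrite Hl eqxx.
  - by move: Hnpq; rewrite -Hl; move: Hw; rewrite andbT => ->.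
case: (Hpos _ Hsh x) => //; first by rewrite !inE eqxx orbT.
- by move=> Exp; move: (Hi p); rewrite -{1}Exp Hp.
- by move=> Exq; move: (Hi q); rewrite -{1}Exq Hq.
Qed.

Lemma threepath (T : finType) (e : rel T) (X : {set T}) p0 p1 p2 p3 :
  (forall a, ~~ e a a) ->
  dual_gp_set e X -> p1 \in X -> e p0 p1 -> e p1 p2 -> e p2 p3 ->
  p0 \notin X -> p3 \notin X ->
  p0 != p3 -> ~~ e p0 p3 -> (forall z, ~~ (e p0 z && e z p3)) -> False.
Proof.
move=> Hi HX Hx H01 H12 H23 H0 H3 Hne Hna Hnz.
have Hpos : positionable e X p0 p3.
  by apply: same_class_pos => //; rewrite (negbTE H0) (negbTE H3).
have Hsh : shortest_path e p0 p3 [:: p1; p2; p3].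
  split; first by split => //=; rewrite H01 H12 H23.
  move=> s' [Hw Hl]; case: s' Hw Hl => [|z [|w [|y s']]] //= Hw Hl.
  - by move: Hne; rewrite Hl eqxx.
  - by move: Hna; rewrite -Hl; move: Hw; rewrite andbT => ->.
  - by move: (Hnz z); move: Hw; rewrite andbT -Hl => /andP [-> ->].
case: (Hpos _ Hsh p1) => //; first by rewrite !inE eqxx orbT.
- by move=> E; move: (Hi p0); rewrite -{2}E H01.
- by move=> E; move: Hna; rewrite -E H01.
Qed.

Lemma far n (u v : sierp_vertex 3 n) (h : 'I_n) :
  (forall t : 'I_n, (t < h)%N -> u t = v t) -> u h != v h ->
  (exists2 t : 'I_n, (h < t)%N & u t != v h) ->
  (exists2 t : 'I_n, (h < t)%N & v t != u h) ->
  [/\ u != v, ~~ sierp_adj u v & forall z, ~~ (sierp_adj u z && sierp_adj z v)].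
Proof.
move=> Hlt Hh [t1 Ht1 Hu1] [t2 Ht2 Hv2]; split.
- by apply/eqP => E; move: Hh; rewrite E eqxx.
- apply/negP => Ha; have [E _] := adj_first Ha Hlt Hh Ht1.
  by move: Hu1; rewrite E eqxx.
move=> z; apply/negP => /andP [/adj_sym Hzu Hzv].
have [h1 [H1 H2 H3]] := adj_elim Hzu.
case: (ltngtP h1 h) => Hc.
- have Hb : forall t : 'I_n, (t < h1)%N -> z t = v t.
    by move=> t Ht; rewrite H2 // Hlt // (ltn_trans Ht Hc).
  have Hd : z h1 != v h1 by rewrite -Hlt.
  have [_ E1] := adj_first Hzv Hb Hd Hc.
  have [_ E2] := H3 _ Hc.
  by move: Hh; rewrite E1 E2 eqxx.
- have Hb : forall t : 'I_n, (t < h)%N -> z t = v t.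
    by move=> t Ht; rewrite H2 ?Hlt // (ltn_trans Ht Hc).
  have Hd : z h != v h by rewrite H2.
  have [_ E1] := adj_first Hzv Hb Hd Ht2.
  by move: Hv2; rewrite E1 H2 // eqxx.
- have E : h1 = h by apply: val_inj.
  subst h1.
  case: (eqVneq (z h) (v h)) => Ezv.
    have [_ E1] := H3 _ Ht1.
    by move: Hu1; rewrite E1 Ezv eqxx.
  have Hb : forall t : 'I_n, (t < h)%N -> z t = v t.
    by move=> t Ht; rewrite H2 ?Hlt.
  have [E1 _] := adj_first Hzv Hb Ezv Ht1.
  have [E2 _] := H3 _ Ht1.
  by move: Hh; rewrite -E1 E2 eqxx.
Qed.

Lemma pick3 (i j : 'I_3) : exists m : 'I_3, m != i /\ m != j.
Proof.
case: i j => [[|[|[|?]]] Hi] [[|[|[|?]]] Hj] //;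
 first [by exists (@Ordinal 3 0 isT) | by exists (@Ordinal 3 1 isT) | by exists (@Ordinal 3 2 isT)].
Qed.

Lemma ltL n' (t : 'I_n'.+1) : t != ord_max -> (t < n')%N.
Proof.
move=> H; have := ltn_ord t; rewrite ltnS leq_eqVlt => /orP [/eqP E|//].
by move: H; rewrite -(inj_eq val_inj) /= E eqxx.
Qed.

Lemma ngtL n' (s : 'I_n'.+1) : ~~ (@ord_max n' < s)%N.
Proof. by rewrite -leqNgt /= -ltnS. Qed.

Lemma adj_mate n' (u b : sierp_vertex 3 n'.+1) :
  (forall t, t != ord_max -> b t = u t) -> b ord_max != u ord_max -> sierp_adj u b.
Proof.
move=> Hb Hne; apply: (adj_intro (h:=ord_max)); first by rewrite eq_sym.
- move=> s Hs; rewrite Hb //; apply/negP => /eqP E; by move: Hs; rewrite E ltnn.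
- by move=> s Hs; move: (ngtL s); rewrite Hs.
Qed.

Lemma q1 n' (u w b : sierp_vertex 3 n'.+1) (h : 'I_n'.+1) :
  h != ord_max -> sierp_adj u w -> (forall t : 'I_n'.+1, (t < h)%N -> u t = w t) -> u h != w h ->
  (forall t, t != ord_max -> b t = u t) -> b ord_max != u ord_max -> ~~ sierp_adj b w.
Proof.
move=> HhL Huw Hlt Hh Hb HbL; apply/negP => Hbw.
have Hlt' : forall t : 'I_n'.+1, (t < h)%N -> b t = w t.
  move=> t Ht; rewrite Hb ?Hlt //; apply/negP => /eqP E.
  by move: (ltn_ord h); rewrite -ltnS; move: Ht; rewrite E /= => /leq_trans H /H; rewrite ltnn.
have Hh' : b h != w h by rewrite Hb.
have HL : (h < @ord_max n')%N by exact: ltL.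
have [E1 _] := adj_first Huw Hlt Hh HL.
have [E2 _] := adj_first Hbw Hlt' Hh' HL.
by move: HbL; rewrite E1 E2 eqxx.
Qed.

Lemma bridge n' (x : sierp_vertex 3 n'.+1) (t0 : 'I_n'.+1) : x t0 != x ord_max ->
  exists (h : 'I_n'.+1) (c : sierp_vertex 3 n'.+1),
   [/\ h != ord_max, sierp_adj x c, (forall t : 'I_n'.+1, (t < h)%N -> x t = c t) & x h != c h].
Proof.
move=> Ht0.
pose P k := (k < n'.+1)%N && (x (inord k) != x ord_max).
have HP : exists k, P k by exists t0; rewrite /P ltn_ord inord_val.
have Hb : forall k, P k -> (k <= n')%N by move=> k /andP [].
case: (ex_maxnP HP Hb) => k /andP [Hk Hxk] Hmax.
pose h : 'I_n'.+1 := inord k.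
have hk : (h : nat) = k by rewrite inordK.
have Hxh : x h != x ord_max by [].
have HhL : h != ord_max by apply/negP => /eqP E; move: Hxh; rewrite E eqxx.
have Habove : forall t : 'I_n'.+1, (h < t)%N -> x t = x ord_max.
  move=> t Ht; apply/eqP; apply/negPn/negP => Hn.
  have : P t by rewrite /P ltn_ord inord_val.
  by move/Hmax; rewrite -hk leqNgt Ht.
pose c : sierp_vertex 3 n'.+1 :=
  [ffun t : 'I_n'.+1 => if (t < h)%N then x t else if t == h then x ord_max else x h].
exists h, c; split => //.
- apply: (adj_intro (h:=h)).
  + by rewrite /c ffunE ltnn eqxx.
  + by move=> t Ht; rewrite ffunE Ht.
  + move=> t Ht; rewrite !ffunE ltnn eqxx ltnNge (ltnW Ht) /=.
    have -> : (t == h) = false by apply/negP => /eqP E; move: Ht; rewrite E ltnn.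
    by rewrite Habove.
- by move=> t Ht; rewrite ffunE Ht.
- by rewrite ffunE ltnn eqxx.
Qed.

Lemma dual_const n' (X : {set sierp_vertex 3 n'.+1}) :
  dual_gp_set (@sierp_adj 3 n'.+1) X -> forall x, x \in X -> forall t, x t = x ord_max.
Proof.
move=> HX x Hx t0; apply/eqP/negPn/negP => Ht0.
have Hs : forall a b : sierp_vertex 3 n'.+1, sierp_adj a b -> sierp_adj b a by move=> a b; exact: adj_sym.
have Hi : forall a : sierp_vertex 3 n'.+1, ~~ sierp_adj a a by move=> a; exact: adj_irr.
have [h [c [HhL Hxc Hlt Hh]]] := bridge Ht0.
have hn : (h < n')%N := ltL HhL.
have hL : (h < @ord_max n')%N := hn.
pose L := @ord_max n'.
pose L1 : 'I_n'.+1 := inord n'.-1.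
have HL1 : (L1 : nat) = n'.-1 by rewrite inordK // ltnS leq_pred.
have L1L : L1 != L.
  rewrite -(inj_eq val_inj) /= HL1; apply/eqP; lia.
have gtL1 : forall t : 'I_n'.+1, (L1 < t)%N -> t = L.
  move=> t; rewrite HL1 => Ht; apply: val_inj => /=; have := ltn_ord t; lia.
have ltL1 : forall t : 'I_n'.+1, (t < L1)%N -> t != L.
  by move=> t Ht; apply/negP => /eqP E; move: Ht; rewrite E HL1 /=; lia.
have [ExL EcL] := adj_first Hxc Hlt Hh hL.
pose p := x L1.
have [m [HmL Hmp]] := pick3 (x L) p.
pose a : sierp_vertex 3 n'.+1 := [ffun t => if t == L then m else x t].
have Ha : forall t, t != L -> a t = x t by move=> t /negbTE Ht; rewrite ffunE Ht.
have HaL : a L = m by rewrite ffunE eqxx.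
have Hxa : sierp_adj x a by apply: adj_mate => //; rewrite HaL.
have Hac : ~~ sierp_adj a c by apply: (q1 HhL Hxc Hlt Hh) => //; rewrite HaL.
have Hneac : a != c by apply/negP => /eqP E; move: Hh; rewrite -E Ha ?eqxx.
have Hac2 := twopath Hs Hi HX Hx Hxa Hxc Hneac Hac.
case Hc: (c \in X).
-
  have HaX : a \notin X by move: Hac2; rewrite Hc; case: (a \in X).
  have [m' [Hm'L _]] := pick3 (c L) (c L).
  pose a' : sierp_vertex 3 n'.+1 := [ffun t => if t == L then m' else c t].
  have Ha' : forall t, t != L -> a' t = c t by move=> t /negbTE Ht; rewrite ffunE Ht.
  have Ha'L : a' L = m' by rewrite ffunE eqxx.
  have Hca' : sierp_adj c a' by apply: adj_mate => //; rewrite Ha'L.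
  have Hcx := Hs _ _ Hxc.
  have Hltc : forall t : 'I_n'.+1, (t < h)%N -> c t = x t by move=> t /Hlt ->.
  have Hhc : c h != x h by rewrite eq_sym.
  have Ha'x : ~~ sierp_adj a' x by apply: (q1 HhL Hcx Hltc Hhc) => //; rewrite Ha'L.
  have Hnea'x : a' != x by apply/negP => /eqP E; move: Hhc; rewrite -E Ha' ?eqxx.
  have := twopath Hs Hi HX Hc Hca' Hcx Hnea'x Ha'x; rewrite Hx.
  move=> Ha'X; have {}Ha'X : a' \notin X by move: Ha'X; case: (a' \in X).
  have Hfar : (forall t : 'I_n'.+1, (t < h)%N -> a t = a' t).
    move=> t Ht; have HtL : t != L.
      by apply/negP => /eqP E; move: (ltn_trans Ht hL); rewrite E ltnn.
    by rewrite Ha // Ha' // Hlt.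
  have Hfh : a h != a' h by rewrite Ha // Ha'.
  have W1 : exists2 t : 'I_n'.+1, (h < t)%N & a t != a' h.
    by exists L => //; rewrite HaL Ha' // -ExL.
  have W2 : exists2 t : 'I_n'.+1, (h < t)%N & a' t != a h.
    by exists L => //; rewrite Ha'L Ha // -EcL.
  have [Hne Hna Hnz] := far Hfar Hfh W1 W2.
  exact: (threepath Hi HX Hx (Hs _ _ Hxa) Hxc Hca' HaX Ha'X Hne Hna Hnz).
-
  have HaX : a \in X by move: Hac2; rewrite Hc; case: (a \in X).
  have [r [Hrp Hrm]] := pick3 p m.
  pose y : sierp_vertex 3 n'.+1 := [ffun t => if t == L then r else x t].
  have Hy : forall t, t != L -> y t = x t by move=> t /negbTE Ht; rewrite ffunE Ht.
  have HyL : y L = r by rewrite ffunE eqxx.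
  have HyX : y \in X.
    case: (eqVneq r (x L)) => Er.
    - have -> : y = x; last by [].
      by apply/ffunP => t; rewrite ffunE; case: eqP => [->|//]; rewrite Er.
    - have Hxy : sierp_adj x y by apply: adj_mate => //; rewrite HyL.
      have Hyc : ~~ sierp_adj y c by apply: (q1 HhL Hxc Hlt Hh) => //; rewrite HyL.
      have Hneyc : y != c by apply/negP => /eqP E; move: Hh; rewrite -E Hy ?eqxx.
      by have := twopath Hs Hi HX Hx Hxy Hxc Hneyc Hyc; rewrite Hc; case: (y \in X).
  have Hsw : forall q, q != p ->
    let u := [ffun t => if t == L then q else x t] in
    let w := [ffun t => if t == L then p else if t == L1 then q else x t] in
    [/\ sierp_adj u w, (forall t : 'I_n'.+1, (t < L1)%N -> u t = w t) & u L1 != w L1].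
    move=> q Hq u w.
    have Hb : forall t : 'I_n'.+1, (t < L1)%N -> u t = w t.
      move=> t Ht; have HtL := ltL1 t Ht.
      have HtL1 : (t == L1) = false by apply/negP => /eqP E; move: Ht; rewrite E ltnn.
      by rewrite !ffunE (negbTE HtL) HtL1.
    have Hd : u L1 != w L1 by rewrite !ffunE (negbTE L1L) eqxx eq_sym.
    split => //; apply: (adj_intro (h:=L1)) => // t /gtL1 ->.
    by rewrite !ffunE eqxx (negbTE L1L) eqxx.
  pose d : sierp_vertex 3 n'.+1 := [ffun t => if t == L then p else if t == L1 then m else x t].
  pose d' : sierp_vertex 3 n'.+1 := [ffun t => if t == L then p else if t == L1 then r else x t].
  have [Had Hadb Hadh] := Hsw m Hmp.
  have [Hyd' Hydb Hydh] := Hsw r Hrp.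
  have Hay : sierp_adj a y.
    apply: adj_mate; last by rewrite HyL HaL.
    by move=> t Ht; rewrite Hy // Ha.
  have Hya : sierp_adj y a.
    apply: adj_mate; last by rewrite HyL HaL eq_sym.
    by move=> t Ht; rewrite Hy // Ha.
  have Hyd : ~~ sierp_adj y d.
    apply: (q1 L1L Had Hadb Hadh); last by rewrite HyL HaL.
    by move=> t Ht; rewrite Hy // Ha.
  have Had' : ~~ sierp_adj a d'.
    apply: (q1 L1L Hyd' Hydb Hydh); last by rewrite HyL HaL eq_sym.
    by move=> t Ht; rewrite Hy // Ha.
  have dL1 : d L1 = m by rewrite ffunE (negbTE L1L) eqxx.
  have d'L1 : d' L1 = r by rewrite ffunE (negbTE L1L) eqxx.
  have dL : d L = p by rewrite ffunE eqxx.
  have d'L : d' L = p by rewrite ffunE eqxx.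
  have Hneyd : y != d.
    by apply/negP => /eqP E; move: Hmp; rewrite -dL1 -E Hy // eqxx.
  have Hnead' : a != d'.
    by apply/negP => /eqP E; move: Hrp; rewrite -d'L1 -E Ha // eqxx.
  have HdX : d \notin X.
    by have := twopath Hs Hi HX HaX Hay Had Hneyd Hyd; rewrite HyX; case: (d \in X).
  have Hd'X : d' \notin X.
    by have := twopath Hs Hi HX HyX Hya Hyd' Hnead' Had'; rewrite HaX; case: (d' \in X).
  have Hfar : forall t : 'I_n'.+1, (t < L1)%N -> d t = d' t.
    move=> t Ht; have HtL := ltL1 t Ht.
    have HtL1 : (t == L1) = false by apply/negP => /eqP E; move: Ht; rewrite E ltnn.
    by rewrite !ffunE (negbTE HtL) HtL1.
  have Hfh : d L1 != d' L1 by rewrite dL1 d'L1 eq_sym.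
  have HL1L : (L1 < L)%N by apply: ltL.
  have W1 : exists2 t : 'I_n'.+1, (L1 < t)%N & d t != d' L1.
    by exists L => //; rewrite dL d'L1 eq_sym.
  have W2 : exists2 t : 'I_n'.+1, (L1 < t)%N & d' t != d L1.
    by exists L => //; rewrite d'L dL1 eq_sym.
  have [Hne Hna Hnz] := far Hfar Hfh W1 W2.
  exact: (threepath Hi HX HaX (Hs _ _ Had) Hay Hyd' HdX Hd'X Hne Hna Hnz).
Qed.

Definition Ext n' := [set v : sierp_vertex 3 n'.+1 | [forall t, v t == v ord_max]].

Lemma card_Ext n' : #|Ext n'| = 3.
Proof.
have -> : Ext n' = [set [ffun _ : 'I_n'.+1 => i] | i : 'I_3].
  apply/setP => v; rewrite !inE; apply/forallP/imsetP.
  - move=> H; exists (v ord_max) => //; apply/ffunP => t; rewrite ffunE; exact/eqP.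
  - by case=> i _ ->  t; rewrite !ffunE.
rewrite card_imset ?card_ord //.
by move=> i j /ffunP /(_ ord_max); rewrite !ffunE.
Qed.

Lemma ext_nbr n' (w z : sierp_vertex 3 n'.+1) : w \in Ext n' -> sierp_adj w z ->
  forall t, t != ord_max -> z t = w t.
Proof.
rewrite inE => /forallP Hw /adj_elim [h [H1 H2 H3]] t Ht.
case: (eqVneq h ord_max) => Hh.
  by subst h; symmetry; apply: H2; exact: ltL.
have [E1 _] := H3 ord_max (ltL Hh).
by move: H1; rewrite (eqP (Hw h)) E1 eqxx.
Qed.

Lemma Ext_total n' : total_gp_set (@sierp_adj 3 n'.+1) (Ext n').
Proof.
move=> u v Huv s [[Hp Hl] Hmin] w Hws HwE.
case: (eqVneq w u) => [->|Hwu]; first by left.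
case: (eqVneq w v) => [->|Hwv]; first by right.
exfalso.
have Hws' : w \in s by move: Hws; rewrite inE (negbTE Hwu).
case/splitPr: Hws' Hp Hl Hmin => s1 s2.
case: s2 => [|z s3].
  by rewrite last_cat /= => _ E; move: Hwv; rewrite E eqxx.
rewrite cat_path last_cat /= => /and3P [Hp1 Hpw /andP [Hwz Hp3]] Hl Hmin.
set pr := last u s1 in Hpw.
have Hnz := ext_nbr HwE Hwz.
have Hnp := ext_nbr HwE (adj_sym Hpw).
case: (eqVneq pr z) => Epz.
- have := Hmin (s1 ++ s3).
  rewrite /is_walk cat_path last_cat -/pr Epz Hp1 Hp3 size_cat /=.
  move/(_ (conj erefl Hl)); rewrite size_cat /=; lia.
- have Hpz : sierp_adj pr z.
    apply: adj_mate; first by move=> t Ht; rewrite Hnz // Hnp.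
    apply/negP => /eqP E; move: Epz; apply/negP/negPn/eqP/ffunP => t.
    by case: (eqVneq t ord_max) => [->|Ht] //; rewrite Hnz // Hnp.
  have := Hmin (s1 ++ z :: s3).
  rewrite /is_walk cat_path last_cat -/pr /= Hp1 Hpz Hp3 size_cat /=.
  move/(_ (conj erefl Hl)); rewrite size_cat /=; lia.
Qed.

Lemma total_dual (T : finType) (e : rel T) X : total_gp_set e X -> dual_gp_set e X.
Proof. by move=> H; split=> u v _ _; apply: H. Qed.

Lemma sub_Ext n' (X : {set sierp_vertex 3 n'.+1}) :
  dual_gp_set (@sierp_adj 3 n'.+1) X -> X \subset Ext n'.
Proof.
move=> HX; apply/subsetP => x Hx; rewrite inE; apply/forallP => t.
by rewrite (dual_const HX Hx t).
Qed.

Lemma gp_gen n' (P : {set sierp_vertex 3 n'.+1} -> Prop) :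
  P (Ext n') -> (forall X, P X -> dual_gp_set (@sierp_adj 3 n'.+1) X) ->
  \max_(X : {set sierp_vertex 3 n'.+1} | `[< P X >]) #|X| = 3 /\
  #|[set X : {set sierp_vertex 3 n'.+1} | `[< P X >] &&
      (#|X| == \max_(X : {set sierp_vertex 3 n'.+1} | `[< P X >]) #|X|)]| = 1.
Proof.
move=> PE Pd.
have Hm : \max_(X : {set sierp_vertex 3 n'.+1} | `[< P X >]) #|X| = 3.
  apply/eqP; rewrite eqn_leq; apply/andP; split.
    apply/bigmax_leqP => X /asboolP /Pd /sub_Ext Hs.
    by apply: (leq_trans (subset_leq_card Hs)); rewrite card_Ext.
  have := leq_bigmax_cond (F := fun X : {set sierp_vertex 3 n'.+1} => #|X|) (P := fun X => `[< P X >]) (Ext n') (asboolT PE).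
  by rewrite card_Ext.
split=> //; rewrite Hm.
have -> : [set X : {set sierp_vertex 3 n'.+1} | `[< P X >] && (#|X| == 3)] = [set Ext n'].
  apply/setP => X; rewrite !inE; apply/andP/eqP.
  - move=> [/asboolP /Pd /sub_Ext Hs /eqP Hc]; apply/eqP.
    by rewrite eqEcard Hs Hc card_Ext.
  - by move=> ->; rewrite card_Ext; split=> //; exact: asboolT.
exact: cards1.
Qed.

Theorem corollary4p2 (n : nat) : (1 <= n)%N ->
  gp_t (@sierp_adj 3 n) = 3 /\ gp_d (@sierp_adj 3 n) = 3 /\
  num_gp_t (@sierp_adj 3 n) = 1 /\ num_gp_d (@sierp_adj 3 n) = 1.
Proof.
case: n => [//|n'] _.
have [Ht1 Ht2] := gp_gen (P := total_gp_set (@sierp_adj 3 n'.+1)) (@Ext_total n') (@total_dual _ _).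
have [Hd1 Hd2] := gp_gen (P := dual_gp_set (@sierp_adj 3 n'.+1)) (total_dual (@Ext_total n')) (fun X H => H).
by rewrite /num_gp_t /num_gp_d /gp_t /gp_d.
Qed.
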